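(* Let $d\ge2$, let $a:\mathbb{Z}^d\curvearrowright X$ be a free Borel action, let $S=\{\pm e_1,\dots,\pm e_d\}$ be the standard generating set of $\mathbb{Z}^d$, and let $U''$ be a single $\mathbb{Z}^d$-orbit. Let $U,V\subseteq U''$ be such that the $G(a,S)$-path distance between $U$ and $V$ is greater than $4d+1$, and let $c$ be an edge coloring of $G(a,S)\upharpoonright(U\cup V)$ with colors $\{1,\dots,2d\}$ which follows protocol $x_0$ on $U$ and protocol $x_1$ on $V$, for some $x_0,x_1\in U''$. Then $c$ can be extended to an edge coloring of $G(a,S)\upharpoonright U''$ with colors $\{1,\dots,2d\}$ which still follows protocol $x_0$ on $U$ and protocol $x_1$ on $V$.
   Context: $e_i\in\mathbb{Z}^d$ has $1$ in coordinate $i$ and $0$ elsewhere. $G(a,S)$ is the Schreier graph: $x,y$ adjacent iff $y=\gamma\cdot x$ for some $\gamma\in S$; each edge has the unique form $(x,e_i\cdot x)$. An edge coloring gives distinct colors to edges sharing a vertex. Protocol: for $U\subseteq U'\subseteq U''$, an edge coloring $c$ of $G(a,S)\upharpoonright U'$ and $x_0\in U''$, $c$ follows protocol $x_0$ on $U$ if every edge $(x,e_i\cdot x)$ of $G(a,S)\upharpoonright U'$ meeting $U$ receives color $2i-1$ if $a_i$ is even and color $2i$ if $a_i$ is odd, where $(a_1,\dots,a_d)\in\mathbb{Z}^d$ is the unique element with $(a_1,\dots,a_d)\cdot x_0=x$. *)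

(* Defs.v *)
From mathcomp Require Import all_boot all_order all_algebra.
Set Implicit Arguments. Unset Strict Implicit. Unset Printing Implicit Defensive.
Import Order.TTheory GRing.Theory Num.Theory.
Local Open Scope ring_scope.

(* Z^d is modelled as integer row vectors 'rV[int]_d; an action of Z^d on X
   is a map act : 'rV[int]_d -> X -> X (axioms are hypotheses of the theorem). *)

Definition ebas (d : nat) (i : 'I_d) : 'rV[int]_d := delta_mx 0 i.

Section Schreier.
Variables (d : nat) (X : Type) (act : 'rV[int]_d -> X -> X).

Definition sadj (x y : X) : Prop :=
  exists i : 'I_d, y = act (ebas i) x \/ y = act (- ebas i) x.

Fixpoint within (n : nat) (x y : X) : Prop :=
  match n with
  | O => x = y
  | S m => within m x y \/ exists w, within m x w /\ sadj w y
  end.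

Definition dist_gt (U V : X -> Prop) (n : nat) : Prop :=
  forall u v, U u -> V v -> ~ within n u v.

(* The edge (x, e_i . x) is represented by the pair (x, i).
   It is an edge of G(a,S) restricted to W iff both endpoints are in W. *)
Definition edge_in (W : X -> Prop) (x : X) (i : 'I_d) : Prop :=
  W x /\ W (act (ebas i) x).

Definition meets (U : X -> Prop) (x : X) (i : 'I_d) : Prop :=
  U x \/ U (act (ebas i) x).

(* c : X -> 'I_d -> nat assigns the colour c x i to the edge (x, e_i . x).
   Edge colouring of G(a,S)|W with colours {1,...,k}: edges sharing a vertex
   get distinct colours. *)
Definition edge_coloring (W : X -> Prop) (k : nat) (c : X -> 'I_d -> nat) : Prop :=
  (forall x i, edge_in W x i -> (1 <= c x i <= k)%N) /\
  (forall x i y j, edge_in W x i -> edge_in W y j -> (x, i) <> (y, j) ->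
     (x = y \/ x = act (ebas j) y \/ act (ebas i) x = y
      \/ act (ebas i) x = act (ebas j) y) ->
     c x i <> c y j).

(* protocol colour of edge (x, e_i . x) when x = a . x0: 2i-1 if a_i even,
   2i if a_i odd (paper's 1-based i; here i is 0-based, so 2i+1 / 2i+2). *)
Definition protocol_color (a : 'rV[int]_d) (i : 'I_d) : nat :=
  if (2%:Z %| a ord0 i)%Z then (2 * i).+1 else (2 * i).+2.

Definition follows_protocol (U U' : X -> Prop) (x0 : X) (c : X -> 'I_d -> nat) : Prop :=
  forall x i, edge_in U' x i -> meets U x i ->
    forall a : 'rV[int]_d, act a x0 = x -> c x i = protocol_color a i.

End Schreier.

(* Main.v *)
Require Import Defs.
From mathcomp Require Import all_boot all_order all_algebra.
From mathcomp Require Import zify.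
From Stdlib Require Import Classical ClassicalEpsilon.
Import GRing.Theory.
Local Open Scope ring_scope.
Set Implicit Arguments. Unset Strict Implicit.


Section Walk.
Variables (d : nat) (X : Type) (act : 'rV[int]_d -> X -> X).
Hypothesis act0 : forall x, act 0 x = x.
Hypothesis actD : forall g h x, act (g + h) x = act g (act h x).

Lemma within_mono m n x y : (m <= n)%N -> within act m x y -> within act n x y.
Proof.
elim: n => [|n IH]; first by rewrite leqn0 => /eqP ->.
rewrite leq_eqVlt => /orP [/eqP -> //|]; rewrite ltnS => hm H.
by left; apply: IH.
Qed.

Lemma within_step m x w y : within act m x w -> sadj act w y -> within act m.+1 x y.
Proof. by move=> H1 H2; right; exists w. Qed.

Lemma within_refl m x : within act m x x.
Proof. by elim: m => [|m IH] //=; left. Qed.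

Lemma sadj_sym x y : sadj act x y -> sadj act y x.
Proof.
case=> i [->|->]; exists i.
- by right; rewrite -actD addNr act0.
- by left; rewrite -actD subrr act0.
Qed.

Lemma within_prepend m x w y : sadj act x w -> within act m w y -> within act m.+1 x y.
Proof.
move=> Hxw; elim: m y => [|m IH] y /=.
- by move=> <-; right; exists x; split.
- case=> [H|[w' [H1 H2]]].
  + by left; apply: IH.
  + by right; exists w'; split => //; apply: IH.
Qed.

Lemma within_sym m x y : within act m x y -> within act m y x.
Proof.
elim: m x y => [|m IH] x y /=; first by move=> ->.
case=> [H|[w [H1 H2]]]; first by left; apply: IH.
by apply: within_prepend (sadj_sym H2) (IH _ _ H1).
Qed.
End Walk.

Section Core.
Variable d : nat.
Local Notation vec := ('rV[int]_d).
Local Notation e := (@ebas d).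
Definition addact (g a : vec) : vec := g + a.

Definition ev (a : vec) (l : 'I_d) : bool := (2%:Z %| a ord0 l)%Z.
Lemma evD (a : vec) l k : ev (a + e l) k = if k == l then ~~ ev a k else ev a k.
Proof. rewrite /ev /ebas !mxE /=. case: (k == l) => /=; lia. Qed.
Lemma evB (a : vec) l k : ev (a - e l) k = if k == l then ~~ ev a k else ev a k.
Proof. rewrite /ev /ebas !mxE /=. case: (k == l) => /=; lia. Qed.

Lemma entryD (u v : vec) i k : (u + v) i k = u i k + v i k.
Proof. by rewrite mxE. Qed.
Lemma entryN (u : vec) i k : (- u) i k = - u i k.
Proof. by rewrite mxE. Qed.
Ltac vsolve := apply/rowP => ?; rewrite ?entryD ?entryN; lia.

Definition cl := ('I_d * bool)%type.
Definition step := (cl * cl)%type.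

Definition sq_ok (st : step) (s : vec) := ev s st.1.1 = st.1.2 /\ ev s st.2.1 = st.2.2.
Definition sqE (st : step) (s a : vec) (l : 'I_d) :=
  (a = s /\ l = st.1.1) \/ (a = s + e st.2.1 /\ l = st.1.1) \/
  (a = s /\ l = st.2.1) \/ (a = s + e st.1.1 /\ l = st.2.1).
Definition sqV (st : step) (s y : vec) :=
  y = s \/ y = s + e st.1.1 \/ y = s + e st.2.1 \/ y = s + e st.1.1 + e st.2.1.
Definition touch (a : vec) (l : 'I_d) (w : vec) := w = a \/ w = a + e l.
Definition near1 (y w : vec) := w = y \/ sadj addact y w.
Definition inType (st : step) (a : vec) (k : 'I_d) := (k, ev a k) = st.1 \/ (k, ev a k) = st.2.

Ltac nsolve i j :=
  rewrite /near1 /sadj /addact;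
  first [ left; vsolve
        | right; exists i; left; vsolve
        | right; exists i; right; vsolve
        | right; exists j; left; vsolve
        | right; exists j; right; vsolve ].

Lemma L_near st s a l y : sqE st s a l -> sqV st s y -> near1 y a \/ near1 y (a + e l).
Proof.
case: st => [[i pi] [j pj]]; rewrite /sqE /sqV /=.
move=> HE HV; case: HE => [[-> ->]|[[-> ->]|[[-> ->]|[-> ->]]]];
 case: HV => [->|[->|[->|->]]].
all: try (first [left; nsolve i j | right; nsolve i j]).
all: first [left; nsolve i j | right; nsolve i j].
Qed.

Ltac disj4 T := first [left; T | right; left; T | right; right; left; T | right; right; right; T].

Lemma L_touch_sq st s a l w : sqE st s a l -> touch a l w -> sqV st s w.
Proof.
case: st => [[i pi] [j pj]]; rewrite /sqE /sqV /touch /=.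
move=> HE; case: HE => [[-> ->]|[[-> ->]|[[-> ->]|[-> ->]]]];
 case => ->; disj4 vsolve.
Qed.

Lemma L_near2 st s y u : sqV st s y -> sqV st s u -> exists z, near1 y z /\ near1 z u.
Proof.
case: st => [[i pi] [j pj]]; rewrite /sqV /=.
move=> HY HU; case: HY => [->|[->|[->|->]]]; case: HU => [->|[->|[->|->]]];
 first [ exists s; split; nsolve i j
       | exists (s + e i); split; nsolve i j
       | exists (s + e j); split; nsolve i j
       | exists (s + e i + e j); split; nsolve i j ].
Qed.

Ltac ptry A L hji :=
  exists A, L; split; [disj4 ltac:(split; [vsolve|reflexivity]) |
    split; [first [left; vsolve | right; vsolve] | by rewrite ?eqxx ?hji]].

Lemma L_partner st s a l w : st.1.1 != st.2.1 -> sqE st s a l -> touch a l w ->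
  exists a' l', sqE st s a' l' /\ touch a' l' w /\ (l' == st.1.1) = ~~ (l == st.1.1).
Proof.
case: st => [[i pi] [j pj]]; rewrite /sqE /touch /=.
move=> hij; have hji : (j == i) = false by rewrite eq_sym (negbTE hij).
move=> HE; case: HE => [[-> ->]|[[-> ->]|[[-> ->]|[-> ->]]]];
 case => ->;
 first [ ptry s i hji | ptry (s + e j) i hji | ptry s j hji | ptry (s + e i) j hji ].
Qed.

Lemma L_sq_cls st s a l : st.1.1 != st.2.1 -> sq_ok st s -> sqE st s a l ->
  (l = st.1.1 /\ (l, ev a l) = st.1) \/ (l = st.2.1 /\ (l, ev a l) = st.2).
Proof.
case: st => [[i pi] [j pj]]; rewrite /sq_ok /sqE /=.
move=> hij; have hji : (j == i) = false by rewrite eq_sym (negbTE hij).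
move=> [H1 H2]; case => [[-> ->]|[[-> ->]|[[-> ->]|[-> ->]]]].
- by left; rewrite H1.
- by left; rewrite evD (negbTE hij) H1.
- by right; rewrite H2.
- by right; rewrite evD hji H2.
Qed.

Lemma L_exists_sq st a k : st.1.1 != st.2.1 -> inType st a k -> exists s, sq_ok st s /\ sqE st s a k.
Proof.
case: st => [[i pi] [j pj]]; rewrite /inType /sq_ok /sqE /=.
move=> hij; have hji : (j == i) = false by rewrite eq_sym (negbTE hij).
case=> -[-> He].
- case Ej: (ev a j == pj).
  + exists a; split.
    * split. exact He. by move/eqP: Ej.
    *
    by left.
  + exists (a - e j); split.
    * rewrite !evB (negbTE hij) eqxx He; split=> //.
      by move: Ej; case: pj; case: (ev a j).
    * right; left; split=> //; vsolve.
- case Ei: (ev a i == pi).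
  + exists a; split.
    * split. by move/eqP: Ei. exact He.
    *
    by right; right; left.
  + exists (a - e i); split.
    * rewrite !evB hji eqxx He; split=> //.
      by move: Ei; case: pi; case: (ev a i).
    * right; right; right; split=> //; vsolve.
Qed.

Variable V' : vec -> Prop.
Definition P m y := exists v, V' v /\ within addact m v y.

Lemma P_mono m n y : (m <= n)%N -> P m y -> P n y.
Proof. by move=> hmn [v [Hv Hw]]; exists v; split => //; apply: within_mono Hw. Qed.

Lemma P_near m y w : P m y -> near1 y w -> P m.+1 w.
Proof.
move=> [v [Hv Hw]] [->|Hs]; exists v; split => //.
- by left.
- by apply: within_step Hw Hs.
Qed.

Lemma P_near_add m y w k : P m y -> near1 y w -> (m.+1 <= k)%N -> P k w.
Proof. by move=> H1 H2 hk; apply: P_mono hk (P_near H1 H2). Qed.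

Definition dec (Q : Prop) : bool := if excluded_middle_informative Q then true else false.
Lemma decT (Q : Prop) : Q -> dec Q = true.
Proof. by rewrite /dec; case: excluded_middle_informative. Qed.
Lemma decF (Q : Prop) : ~ Q -> dec Q = false.
Proof. by rewrite /dec; case: excluded_middle_informative. Qed.

Definition applied st T a l :=
  exists s, sq_ok st s /\ sqE st s a l /\ exists y, sqV st s y /\ P T y.
Definition swapg (T : eqType) (x y z : T) : T := if z == x then y else if z == y then x else z.
Notation swapn := (@swapg nat).
Definition kempe st T (al be : nat) (col : vec -> 'I_d -> nat) a l :=
  if dec (applied st T a l) then swapn al be (col a l) else col a l.
Definition ProperZ (col : vec -> 'I_d -> nat) := forall a l b k, (a, l) <> (b, k) ->
  (exists w, touch a l w /\ touch b k w) -> col a l <> col b k.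
Definition Valid st T al be (col : vec -> 'I_d -> nat) := forall s, sq_ok st s ->
  (exists y, sqV st s y /\ P T y) ->
  forall a l, sqE st s a l -> col a l = if l == st.1.1 then al else be.

Lemma swapgK (T : eqType) (x y : T) : involutive (swapg x y).
Proof.
move=> z; rewrite /swapg.
case: (z =P x) => [->|zx].
- by case: (y =P x) => [->|yx]; rewrite ?eqxx //.
- case: (z =P y) => [->|zy]; rewrite ?eqxx //.
  by move/eqP/negbTE: zx => ->; move/eqP/negbTE: zy => ->.
Qed.
Lemma swapn_inj x y : injective (swapn x y).
Proof. exact: inv_inj (swapgK x y). Qed.

Lemma swapn_al al be : swapn al be al = be.
Proof. by rewrite /swapg eqxx. Qed.
Lemma swapn_be al be : swapn al be be = al.
Proof. by rewrite /swapg; case: eqP => [->|]; rewrite ?eqxx. Qed.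

Lemma one_side st T al be col a l b k w : st.1.1 != st.2.1 -> ProperZ col ->
  Valid st T al be col ->
  applied st T a l -> ~ applied st T b k -> touch a l w -> touch b k w ->
  swapn al be (col a l) <> col b k.
Proof.
move=> hij Hp Hv [s [ok [E Hy]]] nB Ta Tb.
have Ca := Hv s ok Hy a l E.
have [a' [l' [E' [T' Hl']]]] := L_partner hij E Ta.
have Ca' := Hv s ok Hy a' l' E'.
have -> : swapn al be (col a l) = col a' l'.
  by rewrite Ca Ca' Hl'; case: (l == st.1.1) => /=; [exact: swapn_al | exact: swapn_be].
case: (eqVneq (a', l') (b, k)) => [Heq|hne].
- exfalso; case: Heq => Ea El; subst a' l'.
  by apply: nB; exists s; split => //; split => //.
- apply: Hp; first exact/eqP.
  by exists w.
Qed.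

Lemma kempe_proper st T al be col : st.1.1 != st.2.1 -> ProperZ col ->
  Valid st T al be col -> ProperZ (kempe st T al be col).
Proof.
move=> hij Hp Hv a l b k Hne [w [Ta Tb]]; rewrite /kempe.
case: (classic (applied st T a l)) => HA; case: (classic (applied st T b k)) => HB;
 rewrite ?(decT HA) ?(decF HA) ?(decT HB) ?(decF HB).
- by move/swapn_inj; apply: Hp Hne _; exists w.
- exact: one_side hij Hp Hv HA HB Ta Tb.
- by apply: nesym; exact: one_side hij Hp Hv HB HA Tb Ta.
- by apply: Hp Hne _; exists w.
Qed.

Lemma ev_sub (a b : vec) k : ev (a - b) k = ev a k (+) ~~ ev b k.
Proof.
rewrite /ev entryD entryN.
case Ha: (2%:Z %| a ord0 k)%Z; case Hb: (2%:Z %| b ord0 k)%Z => /=; lia.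
Qed.


Variable N : nat.
Definition swapc (g : cl -> nat) (c1 c2 : cl) (c : cl) : nat :=
  if c == c1 then g c2 else if c == c2 then g c1 else g c.
Definition gam0 (c : cl) : nat := if c.2 then (2 * c.1).+1%N else (2 * c.1).+2%N.
Fixpoint gam (l : seq step) : cl -> nat :=
  if l is st :: r then swapc (gam r) st.1 st.2 else gam0.
Fixpoint col (l : seq step) : vec -> 'I_d -> nat :=
  if l is st :: r then kempe st (N - size r) (gam r st.1) (gam r st.2) (col r)
  else (fun a k => gam0 (k, ev a k)).
Fixpoint Full (l : seq step) (a : vec) (k : 'I_d) : Prop :=
  if l is st :: r then Full r a k /\ (inType st a k -> applied st (N - size r) a k)
  else True.
Definition good (l : seq step) := all (fun st : step => st.1.1 != st.2.1) l.

Lemma gam0_inj : injective gam0.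
Proof.
move=> [i p] [j q]; rewrite /gam0 /= => H.
have Hij : i = j :> nat by move: H; case: p; case: q => /=; lia.
have Epq : p = q by move: H; case: p; case: q => //=; lia.
by rewrite Epq (ord_inj Hij).
Qed.

Lemma swapc_inj g c1 c2 : injective g -> injective (swapc g c1 c2).
Proof.
move=> Hg.
have E c : swapc g c1 c2 c = g (swapg c1 c2 c).
  by rewrite /swapc /swapg; case: ifP => _ //; case: ifP.
by move=> u v; rewrite !E => /Hg /(inv_inj (swapgK c1 c2)).
Qed.

Lemma gam_inj l : injective (gam l).
Proof. elim: l => [|st r IH] /=; [exact: gam0_inj | exact: swapc_inj]. Qed.

Lemma gam_range l c : (1 <= gam l c <= 2 * d)%N.
Proof.
elim: l c => [|st r IH] c /=.
- rewrite /gam0; case: c => i p /=; have := ltn_ord i; case: p; lia.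
- by rewrite /swapc; case: ifP => _; [|case: ifP => _].
Qed.

Lemma col_range l a k : (1 <= col l a k <= 2 * d)%N.
Proof.
elim: l a k => [|st r IH] a k /=; first exact: (gam_range [::]).
rewrite /kempe; case: dec => //; rewrite /swapg.
case: ifP => _; first exact: gam_range.
by case: ifP => _; first exact: gam_range.
Qed.

Lemma Full_col l a k : good l -> Full l a k -> col l a k = gam l (k, ev a k).
Proof.
elim: l => [|st r IH] //= /andP [hst hr] [Fr Fst].
rewrite /kempe (IH hr Fr).
case: (classic (applied st (N - size r) a k)) => HA.
- rewrite (decT HA); case: HA => s [ok [E _]].
  have [[_ Hc]|[_ Hc]] := L_sq_cls hst ok E; rewrite Hc.
  + by rewrite /swapc eqxx swapn_al.
  + have h : (st.2 == st.1) = false.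
      by apply/negbTE; apply: contra hst => /eqP ->.
    by rewrite swapn_be /swapc h eqxx.
- rewrite (decF HA).
  have nT : ~ inType st a k by move/Fst.
  have h1 : ((k, ev a k) == st.1) = false by apply/eqP => h; apply: nT; left.
  have h2 : ((k, ev a k) == st.2) = false by apply/eqP => h; apply: nT; right.
  by rewrite /swapc h1 h2.
Qed.

Lemma Full_of_close l a k w : good l -> (size l <= N)%N -> touch a k w ->
  P (N.+1 - size l) w -> Full l a k.
Proof.
elim: l => [|st r IH] //= /andP [hst hr] hs Tw Pw; split.
- apply: IH => //; first lia.
  by apply: P_mono Pw; lia.
- move=> HT; have [s [ok E]] := L_exists_sq hst HT.
  exists s; split => //; split => //.
  exists w; split; first exact: L_touch_sq E Tw.
  by move: Pw; have -> : (N.+1 - (size r).+1 = N - size r)%N by lia.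
Qed.

Lemma Valid_col st r : good (st :: r) -> (size (st :: r) <= N)%N ->
  Valid st (N - size r) (gam r st.1) (gam r st.2) (col r).
Proof.
move=> /= /andP [hst hr] hs s ok [y [Vy Py]] a l E.
have Hfull : Full r a l.
  have [Ha|Ha] := L_near E Vy.
  - apply: (@Full_of_close _ _ _ a) => //; [lia | by left | apply: P_near_add Py Ha _; lia].
  - apply: (@Full_of_close _ _ _ (a + e l)) => //;
      [lia | by right | apply: P_near_add Py Ha _; lia].
rewrite (Full_col hr Hfull).
have [[El Hc]|[El Hc]] := L_sq_cls hst ok E; rewrite Hc El ?eqxx //.
by rewrite eq_sym (negbTE hst).
Qed.

Lemma gam0_proper : ProperZ (fun a k => gam0 (k, ev a k)).
Proof.
move=> a l b k Hne [w [Ta Tb]] /gam0_inj [El Ee]; subst k.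
move: Ta Tb => [->|->] [H|H].
- by apply: Hne; rewrite H.
- by move: Ee; rewrite H evD eqxx; case: (ev b l).
- by move: Ee; rewrite -H evD eqxx; case: (ev a l).
- by apply: Hne; rewrite (addIr _ H).
Qed.

Lemma Proper_col l : good l -> (size l <= N)%N -> ProperZ (col l).
Proof.
elim: l => [|st r IH] /=; first by move=> _ _; exact: gam0_proper.
move=> /andP [hst hr] hs.
apply: kempe_proper => //.
- apply: IH => //; lia.
- by apply: Valid_col => //=; rewrite hst.
Qed.

Lemma col_far l a k u : (size l <= N)%N -> touch a k u -> ~ P N.+2 u ->
  col l a k = gam0 (k, ev a k).
Proof.
elim: l => [|st r IH] //= hs Tu nP.
rewrite /kempe; case: (classic (applied st (N - size r) a k)) => HA.
- exfalso; case: HA => s [ok [E [y [Vy Py]]]].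
  have Vu := L_touch_sq E Tu.
  have [z [H1 H2]] := L_near2 Vy Vu.
  apply: nP; apply: (P_near_add (P_near Py H1) H2); lia.
- rewrite (decF HA); apply: IH => //; lia.
Qed.

Variables (o0 o1 : 'I_d).
Hypothesis ho : o0 != o1.
Definition helper (i : 'I_d) : 'I_d := if i == o0 then o1 else o0.
Lemma helper_neq i : i != helper i.
Proof.
rewrite /helper; case: (eqVneq i o0) => [->|h] //.
Qed.
Definition flip3 (i : 'I_d) : seq step :=
  [:: ((i, true), (helper i, true)); ((i, false), (helper i, true));
      ((i, true), (helper i, true))].
Definition steps (F : seq 'I_d) : seq step := flatten (map flip3 F).

Lemma good_steps F : good (steps F).
Proof.
elim: F => [|i F IH] //=.
rewrite /good /= helper_neq /=. exact: IH.
Qed.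

Lemma size_steps F : size (steps F) = (3 * size F)%N.
Proof. elim: F => [|i F IH] //=; rewrite IH; lia. Qed.

Lemma gam_flip3 i r c :
  gam (flip3 i ++ r) c = gam r (if c.1 == i then (i, ~~ c.2) else c).
Proof.
case: c => k p /=.
have hne := helper_neq i.
have hne' : (helper i == i) = false by rewrite eq_sym (negbTE hne).
rewrite /swapc !xpair_eqE /=.
case: (eqVneq k i) => [->|hk].
- by case: p; rewrite /= ?eqxx ?hne' ?(negbTE hne) /= ?eqxx ?hne' ?(negbTE hne).
- case: (eqVneq k (helper i)) => [->|hk2].
  + by case: p; rewrite /= ?eqxx ?hne' ?(negbTE hne) /= ?eqxx ?hne' ?(negbTE hne).
  + by rewrite ?(negbTE hk) ?(negbTE hk2) /=.
Qed.

Lemma gam_steps F c : uniq F -> gam (steps F) c = gam0 (c.1, c.2 (+) (c.1 \in F)).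
Proof.
elim: F c => [|i F IH] c; first by rewrite /= addbF; case: c.
rewrite cons_uniq => /andP [hi hu].
have -> : steps (i :: F) = flip3 i ++ steps F by [].
rewrite (gam_flip3 i (steps F) c) IH //.
case: c => k p /=; rewrite in_cons.
case: (eqVneq k i) => [->|hk] /=.
- by rewrite (negbTE hi) addbT addbF.
- by [].
Qed.

End Core.

Theorem coreZ (d : nat) (o0 o1 : 'I_d) (ho : o0 != o1)
  (U' V' : 'rV[int]_d -> Prop) (b : 'rV[int]_d)
  (hdist : forall u v, U' u -> V' v -> ~ within (@addact d) (3 * d).+2 v u) :
  exists C : 'rV[int]_d -> 'I_d -> nat,
    ProperZ C /\ (forall a k, (1 <= C a k <= 2 * d)%N) /\
    (forall a k u, U' u -> touch a k u -> C a k = protocol_color a k) /\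
    (forall a k v, V' v -> touch a k v -> C a k = protocol_color (a - b) k).
Proof.
pose F := [seq i <- enum 'I_d | ~~ ev b i].
have uF : uniq F by rewrite filter_uniq // enum_uniq.
have sF : (size F <= d)%N.
  by rewrite size_filter; apply: leq_trans (count_size _ _) _; rewrite size_enum_ord.
pose N := (3 * d)%N.
pose st := steps o0 o1 F.
have gst : good st by exact: good_steps.
have sst : (size st <= N)%N by rewrite /st size_steps /N; lia.
exists (col V' N st); split; [exact: Proper_col | split; [exact: col_range | split]].
- move=> a k u Hu Tu.
  rewrite (@col_far _ V' N st a k u) //.
  case=> v [Hv Hw]; apply: (hdist u v Hu Hv); exact: Hw.
- move=> a k v Hv Tv.
  have Hf : Full V' N st a k.
    apply: (@Full_of_close _ _ _ _ _ _ v) => //.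
    by exists v; split => //; apply: within_refl.
  rewrite (Full_col gst Hf) gam_steps //=.
  rewrite /protocol_color -/(ev (a - b) k) ev_sub /gam0 /=.
  by rewrite mem_filter mem_enum andbT.
Qed.


Section XSide.
Variables (d : nat) (X : Type) (act : 'rV[int]_d -> X -> X).
Hypothesis act0 : forall x, act 0 x = x.
Hypothesis actD : forall g h x, act (g + h) x = act g (act h x).
Hypothesis free : forall g x, act g x = x -> g = 0.
Variable x0 : X.

Lemma act_inj a a' : act a x0 = act a' x0 -> a = a'.
Proof.
move=> H.
have : act (a - a') (act a' x0) = act a' x0 by rewrite -actD subrK.
by move/free/eqP; rewrite subr_eq0 => /eqP.
Qed.

Definition coord (x : X) : 'rV[int]_d :=
  match excluded_middle_informative (exists a, act a x0 = x) with
  | left H => proj1_sig (constructive_indefinite_description _ H)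
  | right _ => 0
  end.

Lemma coordP x : (exists a, act a x0 = x) -> act (coord x) x0 = x.
Proof.
move=> H; rewrite /coord; case: excluded_middle_informative => // H'.
by case: constructive_indefinite_description.
Qed.

Lemma coord_act a : coord (act a x0) = a.
Proof. by apply: act_inj; apply: coordP; exists a. Qed.

Lemma transport m a b : within (@addact d) m a b -> within act m (act a x0) (act b x0).
Proof.
elim: m b => [|m IH] b /=; first by move=> ->.
case=> [H|[w [H1 [i H2]]]]; first by left; apply: IH.
right; exists (act w x0); split; first exact: IH.
exists i; case: H2 => ->; rewrite /addact actD; [by left | by right].
Qed.
End XSide.

Theorem lemma7 (d : nat) (hd : (2 <= d)%N) (X : Type)
  (act : 'rV[int]_d -> X -> X)
  (act0 : forall x, act 0 x = x)
  (actD : forall g h x, act (g + h) x = act g (act h x))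
  (free : forall g x, act g x = x -> g = 0)
  (U'' U V : X -> Prop)
  (orbit : exists z, forall y, U'' y <-> exists g, y = act g z)
  (UU : forall x, U x -> U'' x) (VU : forall x, V x -> U'' x)
  (hdist : dist_gt act U V (4 * d + 1))
  (c : X -> 'I_d -> nat) (x0 x1 : X) (hx0 : U'' x0) (hx1 : U'' x1)
  (hc : edge_coloring act (fun x => U x \/ V x) (2 * d) c)
  (hcU : follows_protocol act U (fun x => U x \/ V x) x0 c)
  (hcV : follows_protocol act V (fun x => U x \/ V x) x1 c) :
  exists c' : X -> 'I_d -> nat,
    edge_coloring act U'' (2 * d) c' /\
    (forall x i, edge_in act (fun x => U x \/ V x) x i -> c' x i = c x i) /\
    follows_protocol act U U'' x0 c' /\
    follows_protocol act V U'' x1 c'.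
Proof.
have Hor x : U'' x -> exists a, act a x0 = x.
  case: orbit => z Hz Ux.
  have [g ->] := (Hz x).1 Ux.
  have [g0 E0] := (Hz x0).1 hx0.
  by exists (g - g0); rewrite E0 -actD subrK.
pose o0 : 'I_d := Ordinal (ltn_trans (ltnSn 0) hd).
pose o1 : 'I_d := Ordinal hd.
have ho : o0 != o1 by [].
pose U' := fun a => U (act a x0).
pose V' := fun a => V (act a x0).
pose b := coord act x0 x1.
have Hb : act b x0 = x1 by apply: coordP; exact: Hor.
have Hd : forall u v, U' u -> V' v -> ~ within (@addact d) (3 * d).+2 v u.
  move=> u v Hu Hv Hw.
  have := transport actD x0 Hw.
  move/(within_sym act0 actD).
  move=> Hw'.
  apply: (hdist _ _ Hu Hv).
  apply: (within_mono _ Hw'); lia.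
have [C [HP [HR [HU HV]]]] := coreZ ho b Hd.
exists (fun x i => C (coord act x0 x) i).
have cP x : U'' x -> act (coord act x0 x) x0 = x by move=> Ux; apply: coordP; exact: Hor.
split; [split|split; [|split]].
- by move=> x i _; exact: HR.
- move=> x i y j [Ux Uxi] [Uy Uyj] Hne Hsh.
  have [a Ha] := Hor x Ux; have [a' Ha'] := Hor y Uy.
  subst x y; rewrite !(coord_act actD free).
  apply: HP.
  + by case=> E1 E2; apply: Hne; rewrite E1 E2.
  + rewrite -!actD in Hsh.
    case: Hsh => [/(act_inj actD free) E|[/(act_inj actD free) E|
                  [/(act_inj actD free) E|/(act_inj actD free) E]]].
    * by exists a; split; left.
    * by exists a; split; [left | right; rewrite E addrC].
    * by exists a'; split; [right; rewrite -E addrC | left].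
    * by exists (a + ebas i); split; right => //; rewrite addrC E addrC.
- move=> x i [[Ux|Vx] Hxi].
  + rewrite (hcU x i (conj (or_introl Ux) Hxi) (or_introl Ux) _ (cP x (UU x Ux))).
    apply: (HU _ _ (coord act x0 x)); last by left.
    by rewrite /U' (cP x (UU x Ux)).
  + have Ea : act (coord act x0 x - b) x1 = x.
      by rewrite -Hb -actD subrK (cP x (VU x Vx)).
    rewrite (hcV x i (conj (or_intror Vx) Hxi) (or_introl Vx) _ Ea).
    apply: (HV _ _ (coord act x0 x)); last by left.
    by rewrite /V' (cP x (VU x Vx)).
- move=> x i [Ux Uxi] Hm a Ha; subst x.
  rewrite (coord_act actD free).
  case: Hm => Hu.
  + by apply: (HU _ _ a) => //; left.
  + rewrite -actD in Hu.
    apply: (HU _ _ (ebas i + a)) => //; right; by rewrite addrC.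
- move=> x i [Ux Uxi] Hm a Ha.
  rewrite -Hb -actD in Ha; subst x.
  rewrite (coord_act actD free).
  have -> : protocol_color a i = protocol_color (a + b - b) i by rewrite addrK.
  case: Hm => Hv.
  + by apply: (HV _ _ (a + b)) => //; left.
  + rewrite -actD in Hv.
    apply: (HV _ _ (ebas i + (a + b))) => //; right; by rewrite addrC.
Qed.
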